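(* Let $t,\ell,m$ be integers with $1 \le t < \ell \le m$. Then $\hat{w}_1(t;\ell,m)<\hat{w}_r(t;\ell,m)$ for every $2\le r\le \ell$. Moreover, the code $\widehat{C}_{\det}(t;\ell,m)$ has exactly $\mu_1(\ell,m)$ codewords of minimum weight, these codewords generate the code, and every codeword of $\widehat{C}_{\det}(t;\ell,m)$ is a sum of at most $\ell$ codewords of minimum weight.
   Context: $q$ is a prime power; $\mu_t(a,b)$ is the number of $a\times b$ matrices over $\mathbb{F}_q$ of rank exactly $t$. For an $\ell\times m$ matrix $M=(m_{ij})$, $\tau_r(M)=m_{11}+\cdots+m_{rr}$. $\hat{w}_r(t;\ell,m)$ is $\frac{1}{q-1}$ times the number of $\ell\times m$ matrices $M$ over $\mathbb{F}_q$ with $1\le\mathrm{rk}(M)\le t$ and $\tau_r(M)\ne 0$. Let $\widehat{\mathcal D}_t(\ell,m)\subset\mathbb{P}^{\ell m-1}(\mathbb{F}_q)=\mathbb{P}(\mathrm{Mat}_{\ell\times m}(\mathbb{F}_q))$ be the set of points $[M]$ with $M\ne 0$ and $\mathrm{rk}(M)\le t$; let $\hat n=|\widehat{\mathcal D}_t(\ell,m)|$, enumerate its points and choose representatives $M_1,\dots,M_{\hat n}$. The determinantal code $\widehat{C}_{\det}(t;\ell,m)\subseteq\mathbb{F}_q^{\hat n}$ is the set of vectors $(f(M_1),\dots,f(M_{\hat n}))$ for $f=\sum_{i,j}f_{ij}X_{ij}$ ranging over linear forms in the entries of an $\ell\times m$ matrix of indeterminates. *)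

(* Defs.v *)
From HB Require Import structures.
From mathcomp Require Import all_boot all_order all_algebra all_fingroup.
Set Implicit Arguments. Unset Strict Implicit. Unset Printing Implicit Defensive.
Import GRing.Theory.
Local Open Scope ring_scope.

Section Det.
Variable F : finFieldType.

Definition mu (t a b : nat) : nat :=
  #|[set M : 'M[F]_(a, b) | \rank M == t]|.

Definition tau (l m r : nat) (M : 'M[F]_(l, m)) : F :=
  \sum_(i < l | (i < r)%N) \sum_(j < m | (j == i :> nat)) M i j.

Definition what (t l m r : nat) : nat :=
  divn #|[set M : 'M[F]_(l, m) | (1 <= \rank M <= t)%N && (tau r M != 0)]|
       (#|F|.-1).

(* Canonical representative of a projective point: nonzero matrix whose first
   nonzero entry (in the row-major order of mxvec) equals 1. *)
Definition normalized (l m : nat) (M : 'M[F]_(l, m)) : bool :=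
  [exists k : 'I_(l * m),
     (mxvec M 0 k == 1) &&
     [forall k' : 'I_(l * m), (k' < k)%N ==> (mxvec M 0 k' == 0)]].

(* the points of hat D_t(l,m), given by their chosen representatives *)
Definition Dpts (t l m : nat) : {set 'M[F]_(l, m)} :=
  [set M | normalized M && (\rank M <= t)%N].

Definition evalf (l m : nat) (f M : 'M[F]_(l, m)) : F :=
  \sum_(i < l) \sum_(j < m) f i j * M i j.

Definition codeword (t l m : nat) (f : 'M[F]_(l, m)) : 'rV[F]_#|Dpts t l m| :=
  \row_(k < #|Dpts t l m|) evalf f (enum_val k).

Definition Cdet (t l m : nat) : {set 'rV[F]_#|Dpts t l m|} :=
  [set codeword t f | f : 'M[F]_(l, m)].

End Det.

Definition wt (F : fieldType) (n : nat) (c : 'rV[F]_n) : nat :=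
  #|[set k : 'I_n | c 0 k != 0]|.

Definition is_min_weight (F : finFieldType) (n : nat) (C : {set 'rV[F]_n}) (d : nat) : Prop :=
  (exists2 c, c \in C & (c != 0) && (wt c == d)) /\
  (forall c, c \in C -> c != 0 -> (d <= wt c)%N).

Definition min_words (F : finFieldType) (n : nat) (C : {set 'rV[F]_n}) (d : nat) : {set 'rV[F]_n} :=
  [set c in C | (c != 0) && (wt c == d)].

(* Main.v *)
Require Import Defs.
From HB Require Import structures.
From mathcomp Require Import all_boot all_order all_algebra all_fingroup.
From mathcomp Require Import ring lra zify.
Import GRing.Theory.
Local Open Scope ring_scope.

Module P1.
Set Implicit Arguments. Unset Strict Implicit. Unset Printing Implicit Defensive.
Import GRing.Theory.
Local Open Scope ring_scope.

Definition cnt (F : finFieldType) (t l m : nat) (A : 'M[F]_(l,m)) (c : F) : nat :=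
  #|[set M : 'M[F]_(l,m) | (\rank M <= t)%N && (evalf A M == c)]|.
Definition sig (F : finFieldType) (t l m : nat) : nat :=
  #|[set M : 'M[F]_(l,m) | (\rank M <= t)%N]|.

Lemma card_setE (T : finType) (P : pred T) : #|[set x | P x]| = (\sum_x (P x : nat))%N.
Proof. rewrite -sum1_card big_mkcond /=; apply: eq_bigr => x _; rewrite inE; by case: (P x). Qed.

Lemma evalfE (F : finFieldType) l m (A M : 'M[F]_(l,m)) : evalf A M = \tr (A^T *m M).
Proof.
rewrite /evalf /mxtrace exchange_big; apply: eq_bigr => j _; rewrite mxE.
by apply: eq_bigr => i _; rewrite mxE.
Qed.

Lemma evalfMr (F : finFieldType) l m n (A : 'M[F]_(l,n)) (M : 'M[F]_(l,m)) (Q : 'M[F]_(m,n)) :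
  evalf A (M *m Q) = evalf (A *m Q^T) M.
Proof. by rewrite !evalfE mulmxA mxtrace_mulC mulmxA trmx_mul trmxK. Qed.

Lemma evalfMl (F : finFieldType) l m n (A : 'M[F]_(l,n)) (P : 'M[F]_(l,m)) (M : 'M[F]_(m,n)) :
  evalf A (P *m M) = evalf (P^T *m A) M.
Proof. by rewrite !evalfE trmx_mul trmxK mulmxA. Qed.

Lemma evalf_linear (F : finFieldType) l m (A M N : 'M[F]_(l,m)) (k : F) :
  evalf A (k *: M + N) = k * evalf A M + evalf A N.
Proof. by rewrite !evalfE mulmxDr -scalemxAr linearD linearZ. Qed.

Lemma evalf_linearl (F : finFieldType) l m (A B M : 'M[F]_(l,m)) (k : F) :
  evalf (k *: A + B) M = k * evalf A M + evalf B M.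
Proof. by rewrite !evalfE linearD linearZ /= mulmxDl -scalemxAl linearD linearZ. Qed.

Lemma evalfZ (F : finFieldType) l m (A M : 'M[F]_(l,m)) (k : F) :
  evalf A (k *: M) = k * evalf A M.
Proof. by rewrite !evalfE -scalemxAr linearZ. Qed.

Lemma evalfD (F : finFieldType) l m (A M N : 'M[F]_(l,m)) :
  evalf A (M + N) = evalf A M + evalf A N.
Proof. by rewrite !evalfE mulmxDr linearD. Qed.

Lemma evalf0 (F : finFieldType) l m (A : 'M[F]_(l,m)) : evalf A 0 = 0.
Proof. by rewrite evalfE mulmx0 linear0. Qed.

Lemma evalf0l (F : finFieldType) l m (M : 'M[F]_(l,m)) : evalf 0 M = 0.
Proof. by rewrite evalfE linear0 mul0mx linear0. Qed.

End P1.
Import P1.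

Module P2.
Set Implicit Arguments. Unset Strict Implicit. Unset Printing Implicit Defensive.
Import GRing.Theory.
Local Open Scope ring_scope.

Lemma rank_unitr (F : fieldType) m n (M : 'M[F]_(m,n)) (Q : 'M[F]_n) :
  Q \in unitmx -> \rank (M *m Q) = \rank M.
Proof. by move=> U; rewrite mxrankMfree // row_free_unit. Qed.

Lemma rank_unitl (F : fieldType) m n (P : 'M[F]_m) (M : 'M[F]_(m,n)) :
  P \in unitmx -> \rank (P *m M) = \rank M.
Proof.
move=> U; rewrite -mxrank_tr trmx_mul rank_unitr ?mxrank_tr //.
by rewrite unitmx_tr.
Qed.

Lemma cnt_unit (F : finFieldType) t l m (A : 'M[F]_(l,m)) P Q c :
  P \in unitmx -> Q \in unitmx -> cnt t (P^T *m A *m Q^T) c = cnt t A c.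
Proof.
move=> UP UQ; rewrite /cnt.
have inj : injective (fun M : 'M[F]_(l,m) => P *m M *m Q).
  move=> M1 M2 /= E; apply: (can_inj (mulKmx UP)); exact: (can_inj (mulmxK UQ)).
rewrite -[RHS](card_preimset _ inj); apply: eq_card => M; rewrite !inE.
by rewrite rank_unitr // rank_unitl // evalfMr evalfMl mulmxA.
Qed.

Lemma cnt_rank (F : finFieldType) t l m (A : 'M[F]_(l,m)) c :
  cnt t A c = cnt t (pid_mx (\rank A) : 'M[F]_(l,m)) c.
Proof.
rewrite -{1}(mulmx_ebase A) -[col_ebase A]trmxK -[row_ebase A]trmxK.
by rewrite cnt_unit // unitmx_tr ?col_ebase_unit ?row_ebase_unit.
Qed.

Lemma cnt_scale (F : finFieldType) t l m (A : 'M[F]_(l,m)) (k c : F) :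
  k != 0 -> cnt t A (k * c) = cnt t A c.
Proof.
move=> nz; rewrite /cnt.
have inj : injective (fun M : 'M[F]_(l,m) => k *: M).
  by move=> M1 M2 /= /(congr1 (fun X => k^-1 *: X)); rewrite !scalerA mulVf // !scale1r.
rewrite -(card_preimset _ inj); apply: eq_card => M; rewrite !inE.
rewrite mxrank_scale_nz //; congr (_ && _).
rewrite evalfZ.
by rewrite (inj_eq (mulfI nz)).
Qed.

Lemma cnt_sum (F : finFieldType) t l m (A : 'M[F]_(l,m)) :
  sig F t l m = (\sum_c cnt t A c)%N.
Proof.
rewrite /sig /cnt.
under eq_bigr => c _ do rewrite card_setE.
rewrite card_setE.
rewrite exchange_big; apply: eq_bigr => M _.
rewrite (bigD1 (evalf A M)) //= eqxx andbT big1 ?addn0 // => c /negbTE nc.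
by rewrite eq_sym nc andbF.
Qed.

Lemma cnt_sig (F : finFieldType) t l m (A : 'M[F]_(l,m)) :
  sig F t l m = (cnt t A 0%R + (#|F|.-1) * cnt t A 1%R)%N.
Proof.
rewrite (cnt_sum _ A) (bigD1 (0:F)) //=; congr (_ + _)%N.
rewrite (eq_bigr (fun => cnt t A 1)); last first.
  by move=> c nz; rewrite -(cnt_scale _ _ 1 nz) mulr1.
by rewrite sum_nat_const -(cardC1 (0:F)) mulnC.
Qed.

End P2.
Import P2.

Module P3.
Set Implicit Arguments. Unset Strict Implicit. Unset Printing Implicit Defensive.
Import GRing.Theory.
Local Open Scope ring_scope.

Lemma evalf_col (F : finFieldType) l1 l2 m (A : 'M[F]_(l1 + l2, m)) u N :
  evalf A (col_mx u N) = evalf (usubmx A) u + evalf (dsubmx A) N.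
Proof.
by rewrite !evalfE -{1}(vsubmxK A) tr_col_mx mul_row_col linearD.
Qed.

Lemma evalf_tr (F : finFieldType) l m (A M : 'M[F]_(l,m)) : evalf A^T M^T = evalf A M.
Proof. by rewrite !evalfE trmxK -mxtrace_tr trmx_mul trmxK mxtrace_mulC. Qed.

Lemma evalf_row (F : finFieldType) l m1 m2 (A : 'M[F]_(l, m1 + m2)) c Y :
  evalf A (row_mx c Y) = evalf (lsubmx A) c + evalf (rsubmx A) Y.
Proof.
rewrite -[LHS]evalf_tr tr_row_mx evalf_col.
by rewrite -[evalf (lsubmx A) c]evalf_tr -[evalf (rsubmx A) Y]evalf_tr trmx_lsub trmx_rsub.
Qed.

Lemma sum_col_split (l1 l2 m : nat) (T : finType) (f : 'M[T]_(l1 + l2, m) -> nat) :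
  (\sum_M f M = \sum_u \sum_N f (col_mx u N))%N.
Proof.
rewrite pair_bigA /= (reindex (fun p : 'M[T]_(l1,m) * 'M[T]_(l2,m) => col_mx p.1 p.2)) //=.
exists (fun M => (usubmx M, dsubmx M)) => [[u N]|M] _ /=.
  by rewrite col_mxKu col_mxKd.
by rewrite vsubmxK.
Qed.

Lemma sum_row_split (l m1 m2 : nat) (T : finType) (f : 'M[T]_(l, m1 + m2) -> nat) :
  (\sum_M f M = \sum_u \sum_N f (row_mx u N))%N.
Proof.
rewrite pair_bigA /= (reindex (fun p : 'M[T]_(l,m1) * 'M[T]_(l,m2) => row_mx p.1 p.2)) //=.
exists (fun M => (lsubmx M, rsubmx M)) => [[u N]|M] _ /=.
  by rewrite row_mxKl row_mxKr.
by rewrite hsubmxK.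
Qed.

Lemma cntE (F : finFieldType) t l m (A : 'M[F]_(l,m)) c :
  cnt t A c = (\sum_M ((\rank M <= t)%N && (evalf A M == c) : nat))%N.
Proof. by rewrite /cnt card_setE. Qed.

Lemma sigE (F : finFieldType) t l m :
  sig F t l m = (\sum_(M : 'M[F]_(l,m)) ((\rank M <= t)%N : nat))%N.
Proof. by rewrite /sig card_setE. Qed.

Definition X (F : finFieldType) t l' m (A : 'M[F]_(1 + l', m)) (u : 'rV[F]_m) (c : F) : nat :=
  (\sum_(N : 'M[F]_(l', m)) ((\rank (col_mx u N) <= t)%N && (evalf A (col_mx u N) == c) : nat))%N.

Lemma cnt_decomp (F : finFieldType) t l' m (A : 'M[F]_(1 + l', m)) c :
  cnt t A c = (\sum_u X t A u c)%N.
Proof. by rewrite cntE sum_col_split. Qed.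

Lemma X0 (F : finFieldType) t l' m (A : 'M[F]_(1 + l', m)) c :
  X t A 0 c = cnt t (dsubmx A) c.
Proof.
rewrite cntE /X; apply: eq_bigr => N _.
by rewrite rank_col_0mx evalf_col evalf0 add0r.
Qed.


Lemma evalf_delta (F : finFieldType) l m (A : 'M[F]_(l,m)) i j :
  evalf A (delta_mx i j) = A i j.
Proof.
rewrite /evalf (bigD1 i) //= (bigD1 j) //= mxE !eqxx mulr1.
rewrite big1 ?addr0 => [|j' nj]; last by rewrite mxE (negbTE nj) andbF mulr0.
rewrite big1 ?addr0 // => i' ni; rewrite big1 // => j' _.
by rewrite mxE (negbTE ni) mulr0.
Qed.

Lemma nz_entry (F : fieldType) l m (v : 'M[F]_(l,m)) : v != 0 -> exists i j, v i j != 0.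
Proof.
move=> nz; case: (pickP (fun ij : 'I_l * 'I_m => v ij.1 ij.2 != 0)) => [[i j] /= h|all0].
  by exists i, j.
case/eqP: nz; apply/matrixP => i j; have := all0 (i, j); rewrite /= mxE.
by move/negbFE/eqP.
Qed.

Lemma X_shift (F : finFieldType) t l' m (A : 'M[F]_(1 + l', m)) u :
  dsubmx A *m u^T != 0 -> X t A u 0 = X t A u 1.
Proof.
set B := dsubmx A; set v := B *m u^T => nz.
have [i [j vij]] := nz_entry nz.
set w : 'cV[F]_l' := (- (v i j)^-1) *: delta_mx i j.
have Ew : evalf B (w *m u) = -1.
  by rewrite evalfMr -/v evalfZ evalf_delta mulNr mulVf.
rewrite /X (reindex_inj (addIr (w *m u))) /=; apply: eq_bigr => N _.
have -> : col_mx u (N + w *m u) = block_mx 1%:M 0 w 1%:M *m col_mx u N.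
  by rewrite mul_block_col !mul1mx mul0mx addr0 addrC.
rewrite rank_unitl; last first.
  by rewrite unitmxE det_lblock !det1 mulr1 unitr1.
congr (_ && _); rewrite mul_block_col !mul1mx mul0mx addr0.
by rewrite evalf_col evalf_col evalfD Ew -/B addrA addrAC subr_eq0.
Qed.

Definition e0 (F : fieldType) m' : 'rV[F]_(1 + m') := row_mx 1%:M 0.

Lemma pid1_e0 (F : fieldType) m' : (pid_mx 1 : 'M[F]_(1, 1 + m')) = e0 F m'.
Proof.
apply/matrixP => i j; rewrite !mxE; case: splitP => [j' ->|j' ->]; rewrite ?mxE.
  by rewrite !ord1 eqxx.
by rewrite ord1 /=; case: j'.
Qed.

Lemma exists_Q (F : fieldType) m' (u : 'rV[F]_(1 + m')) :
  u != 0 -> exists2 Q, Q \in unitmx & u = e0 F m' *m Q.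
Proof.
move=> nz.
have ru : \rank u = 1%N.
  apply/eqP; rewrite eqn_leq rank_leq_row lt0n mxrank_eq0 nz //.
set C := col_ebase u; set R := row_ebase u.
have UC : C 0 0 \is a GRing.unit.
  by rewrite -det_mx11 -unitmxE col_ebase_unit.
exists (C 0 0 *: R); first by rewrite unitmxZ // row_ebase_unit.
rewrite -{1}(mulmx_ebase u) ru -/C -/R (mx11_scalar C) mul_scalar_mx.
by rewrite -scalemxAl scalemxAr pid1_e0 mxE eqxx mulr1n.
Qed.

Lemma rank_e0 (F : fieldType) l' m' (c' : 'cV[F]_l') (Y : 'M[F]_(l', m')) :
  \rank (col_mx (e0 F m') (row_mx c' Y)) = (\rank Y).+1.
Proof.
rewrite /e0 -[col_mx _ _]/(block_mx _ _ _ _).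
have -> : block_mx 1%:M 0 c' Y = block_mx 1%:M 0 c' 1%:M *m block_mx 1%:M 0 0 Y.
  by rewrite mulmx_block !mulmx0 !mulmx1 !mul0mx !mul1mx !addr0 !add0r.
rewrite rank_unitl; last by rewrite unitmxE det_lblock !det1 mulr1 unitr1.
by rewrite rank_diag_block_mx mxrank1.
Qed.

Lemma X_red (F : finFieldType) t l' m' (A : 'M[F]_(1 + l', 1 + m')) (u : 'rV[F]_(1+m')) c :
  (0 < t)%N -> u != 0 -> dsubmx A *m u^T = 0 ->
  X t A u c = (#|F| ^ l' * cnt t.-1 (pid_mx (\rank (dsubmx A)) : 'M[F]_(l', m'))
                  (c - evalf (usubmx A) u)%R)%N.
Proof.
move=> t0 nz Bu.
have [Q UQ uQ] := exists_Q nz.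
rewrite /X (reindex_inj (can_inj (mulmxK UQ))) /=.
set D := dsubmx A *m Q^T.
have lD : lsubmx D = 0.
  have -> : lsubmx D = D *m (e0 F m')^T.
    by rewrite -{2}(hsubmxK D) tr_row_mx trmx1 trmx0 mul_row_col mulmx1 mulmx0 addr0.
  by rewrite /D -mulmxA -trmx_mul -uQ.
have rD : \rank (rsubmx D) = \rank (dsubmx A).
  have UQT : Q^T \in unitmx by rewrite unitmx_tr.
  by rewrite -(rank_unitr _ UQT) -/D -{2}(hsubmxK D) lD rank_row_0mx.
under eq_bigr => N _ do rewrite uQ -mul_col_mx rank_unitr // evalfMr evalf_col
  -mul_usub_mx -mul_dsub_mx -/D -evalfMr -uQ.
rewrite sum_row_split.
under eq_bigr => c' _ do under eq_bigr => Y _ do rewrite rank_e0 evalf_row lD evalf0l add0r.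
rewrite sum_nat_const card_mx muln1 -rD -cnt_rank cntE; congr (_ * _)%N.
apply: eq_bigr => Y _; rewrite -{1}(prednK t0) ltnS; congr (_ && _).
by rewrite addrC eq_sym -subr_eq eq_sym.
Qed.

End P3.
Import P3.

Module P4.
Set Implicit Arguments. Unset Strict Implicit. Unset Printing Implicit Defensive.
Import GRing.Theory.
Local Open Scope ring_scope.

Definition hh (F : finFieldType) t l m (A : 'M[F]_(l,m)) : int :=
  (cnt t A 0)%:R - (cnt t A 1)%:R.

Definition Hr (F : finFieldType) t l m r : int := hh t (pid_mx r : 'M[F]_(l,m)).

Lemma hh_rank (F : finFieldType) t l m (A : 'M[F]_(l,m)) : hh t A = Hr F t l m (\rank A).
Proof. by rewrite /Hr /hh -!cnt_rank. Qed.

Lemma cnt0_1 (F : finFieldType) t l m : cnt t (0 : 'M[F]_(l,m)) 1 = 0%N.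
Proof. by rewrite cntE big1 // => M _; rewrite evalf0l eq_sym oner_eq0 andbF. Qed.

Lemma sig_cnt (F : finFieldType) t l m : sig F t l m = cnt t (0 : 'M[F]_(l,m)) 0.
Proof. by rewrite (cnt_sig _ 0) cnt0_1 muln0 addn0. Qed.

Lemma Hr0 (F : finFieldType) t l m : Hr F t l m 0 = (sig F t l m)%:R.
Proof. by rewrite /Hr /hh pid_mx_0 cnt0_1 subr0 sig_cnt. Qed.

Lemma dsub0 (R : nmodType) m1 m2 n : dsubmx (0 : 'M[R]_(m1 + m2, n)) = 0.
Proof. by rewrite -[0]col_mx0 col_mxKd. Qed.
Lemma usub0 (R : nmodType) m1 m2 n : usubmx (0 : 'M[R]_(m1 + m2, n)) = 0.
Proof. by rewrite -[0]col_mx0 col_mxKu. Qed.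

Lemma sig_rec (F : finFieldType) t l' m' : (0 < t)%N ->
  sig F t (1 + l') (1 + m') =
  (sig F t l' (1 + m') + (#|F| ^ (1 + m') - 1) * (#|F| ^ l' * sig F t.-1 l' m'))%N.
Proof.
move=> t0; rewrite sig_cnt cnt_decomp (bigD1 0) //= X0 dsub0 -sig_cnt; congr (_ + _)%N.
rewrite (eq_bigr (fun => #|F| ^ l' * sig F t.-1 l' m'))%N; last first.
  move=> u nz; rewrite X_red // ?dsub0 ?mul0mx // mxrank0 pid_mx_0 usub0 evalf0l.
  by rewrite subrr sig_cnt.
by rewrite sum_nat_const cardC1 card_mx mul1n subn1.
Qed.

Lemma f_val (F : finFieldType) t l m (B : 'M[F]_(l,m)) (x : F) :
  ((cnt t B (0 - x))%:R - (cnt t B (1 - x))%:R : int)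
  = ((x == 0)%:R - (x == 1)%:R) * hh t B.
Proof.
rewrite /hh; have [->|x0] := eqVneq x 0.
  by rewrite !subr0 eq_sym oner_eq0 /= subr0 mul1r.
have [->|x1] := eqVneq x 1.
  rewrite subrr sub0r -[- 1]mulr1 cnt_scale ?oppr_eq0 ?oner_eq0 //.
  by rewrite sub0r mulN1r opprB.
rewrite -[0 - x]mulr1 -[1 - x]mulr1 !cnt_scale ?subrr ?mul0r //.
  by rewrite subr_eq0 eq_sym.
by rewrite sub0r oppr_eq0.
Qed.

Lemma evalf_e0 (F : finFieldType) m' : evalf (e0 F m') (e0 F m') = 1.
Proof.
rewrite /e0 evalf_row row_mxKl row_mxKr evalf0l addr0 /evalf.
by rewrite !big_ord1 mxE eqxx mulr1.
Qed.

Lemma H_rec (F : finFieldType) t l' m' (B0 : 'M[F]_(l', m')) : (0 < t)%N ->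
  hh t (block_mx 1%:M 0 0 B0 : 'M[F]_(1 + l', 1 + m'))
  = hh t (row_mx 0 B0 : 'M[F]_(l', 1 + m')) - (#|F| ^ l')%:R * hh t.-1 B0.
Proof.
move=> t0; set A := block_mx _ _ _ _.
have uA : usubmx A = e0 F m' by rewrite /A /block_mx col_mxKu.
have dA : dsubmx A = row_mx 0 B0 by rewrite /A /block_mx col_mxKd.
set e := fun u : 'rV[F]_(1 + m') => evalf (e0 F m') u.
set g := fun u : 'rV[F]_(1 + m') =>
  ((dsubmx A *m u^T == 0)%:R * ((e u == 0)%:R - (e u == 1)%:R) : int).
rewrite /hh !cnt_decomp !natr_sum -sumrB (bigD1 0) //= !X0 dA; congr (_ + _).
rewrite (eq_bigr (fun u => (#|F| ^ l')%:R * (g u * hh t.-1 B0))); last first.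
  move=> u nz; rewrite /g; case: (eqVneq (dsubmx A *m u^T) 0) => Du.
    rewrite !X_red // !natrM -mulrBr dA rank_row_0mx -!cnt_rank uA f_val.
    by rewrite mul1r.
  by rewrite X_shift // subrr mul0r mul0r mulr0.
rewrite -mulr_sumr -mulr_suml -mulrN; congr (_ * _).
suff -> : \sum_(i | i != 0) g i = -1 by rewrite mulN1r.
have : \sum_u g u = 0.
  rewrite /g; under eq_bigr => u _ do rewrite mulrBr.
  rewrite sumrB; apply/eqP; rewrite subr_eq0; apply/eqP.
  rewrite [RHS](reindex_inj (addIr (e0 F m'))) /=; apply: eq_bigr => u _.
  rewrite linearD /= mulmxDr dA.
  have -> : row_mx 0 B0 *m (e0 F m')^T = 0.
    by rewrite /e0 tr_row_mx mul_row_col mul0mx trmx0 mulmx0 addr0.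
  rewrite addr0 /e evalfD evalf_e0; congr (_ * _%:R).
  by rewrite -{2}[1]add0r (inj_eq (addIr 1)).
move=> /eqP; rewrite (bigD1 (0 : 'rV[F]_(1+m'))) //= addrC addr_eq0 => /eqP ->.
rewrite /g /e trmx0 mulmx0 eqxx evalf0 eqxx eq_sym oner_eq0.
by rewrite /= subr0 mul1r.
Qed.

End P4.
Import P4.

Module P5.
Set Implicit Arguments. Unset Strict Implicit. Unset Printing Implicit Defensive.
Import GRing.Theory.
Local Open Scope ring_scope.

Lemma cnt_t0 (F : finFieldType) l m (A : 'M[F]_(l,m)) c :
  cnt 0 A c = (c == 0 : nat).
Proof.
rewrite cntE (bigD1 0) //= mxrank0 evalf0 eq_sym /= big1 ?addn0 // => M nz.
by rewrite leqn0 mxrank_eq0 (negbTE nz).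
Qed.

Lemma Hr_t0 (F : finFieldType) l m r : Hr F 0 l m r = 1.
Proof. by rewrite /Hr /hh !cnt_t0 eqxx oner_eq0 subr0. Qed.

Lemma sig_t0 (F : finFieldType) l m : sig F 0 l m = 1%N.
Proof. by rewrite sig_cnt cnt_t0 eqxx. Qed.

Lemma sig_l0 (F : finFieldType) t m : sig F t 0 m = 1%N.
Proof.
rewrite sigE (bigD1 0) //= mxrank0 big1 // => M nz.
by case/eqP: nz; apply/matrixP => [[]].
Qed.

Lemma Hr_rec (F : finFieldType) t l' m' r : (0 < t)%N -> (0 < r)%N -> (r.-1 <= l')%N -> (r.-1 <= m')%N ->
  Hr F t (1 + l') (1 + m') r = Hr F t l' (1 + m') r.-1 - (#|F| ^ l')%:R * Hr F t.-1 l' m' r.-1.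
Proof.
move=> t0 r0 rl rm.
have rB : \rank (pid_mx r.-1 : 'M[F]_(l', m')) = r.-1 by rewrite rank_pid_mx.
transitivity (hh t (block_mx 1%:M 0 0 (pid_mx r.-1 : 'M[F]_(l', m')) : 'M[F]_(1 + l', 1 + m'))).
  by rewrite hh_rank rank_diag_block_mx mxrank1 rB [(1 + r.-1)%N]add1n prednK.
by rewrite H_rec // !hh_rank rank_row_0mx rB.
Qed.

Lemma rank_rowmx (F : fieldType) n p1 p2 (c : 'M[F]_(n, p1)) (Y : 'M[F]_(n, p2)) :
  (\rank (row_mx c Y) <= \rank c + \rank Y)%N.
Proof.
rewrite -mxrank_tr tr_row_mx -addsmxE -(mxrank_tr c) -(mxrank_tr Y).
exact: (mxrank_adds_leqif c^T Y^T).1.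
Qed.

Lemma ltn_sum_ex (I : finType) (E1 E2 : I -> nat) (j : I) :
  (forall i, E1 i <= E2 i)%N -> (E1 j < E2 j)%N -> (\sum_i E1 i < \sum_i E2 i)%N.
Proof.
move=> le lt; rewrite (bigD1 j) //= [X in (_ < X)%N](bigD1 j) //=.
have := @leq_sum _ (index_enum I) (fun i => i != j) E1 E2 (fun i _ => le i); lia.
Qed.

Lemma sig_inj_gen (F : finFieldType) a n p : (0 < a)%N ->
  (\sum_(c : 'cV[F]_n) \sum_(Y : 'M[F]_(n,p)) ((\rank Y <= a.-1)%N : nat)
    = #|F| ^ n * sig F a.-1 n p)%N /\
  (forall (c : 'cV[F]_n) (Y : 'M[F]_(n,p)), ((\rank Y <= a.-1)%N : nat) <= ((\rank (row_mx c Y) <= a)%N : nat))%N.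
Proof.
move=> a0; split; first by rewrite sum_nat_const card_mx muln1 sigE.
move=> c Y; case h: (\rank Y <= a.-1)%N => //=.
suff -> : (\rank (row_mx c Y) <= a)%N by [].
apply: leq_trans (rank_rowmx c Y) _.
have := rank_leq_col c; lia.
Qed.

Lemma sig_inj (F : finFieldType) a n p : (0 < a)%N ->
  (#|F| ^ n * sig F a.-1 n p <= sig F a n (1 + p))%N.
Proof.
move=> a0; have [<- le] := sig_inj_gen F n p a0.
rewrite sigE sum_row_split; apply: leq_sum => c _; apply: leq_sum => Y _; exact: le.
Qed.

Lemma sig_inj_lt (F : finFieldType) a n p : (0 < a)%N -> (a <= n)%N -> (a <= p)%N ->
  (#|F| ^ n * sig F a.-1 n p < sig F a n (1 + p))%N.
Proof.
move=> a0 an ap; have [<- le] := sig_inj_gen F n p a0.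
rewrite sigE sum_row_split !pair_bigA /=.
apply: (@ltn_sum_ex _ _ _ (0, pid_mx a)) => [[c Y]|] /=; first exact: le.
rewrite rank_row_0mx rank_pid_mx // leqnn -(prednK a0) ltnn //.
Qed.

End P5.
Import P5.

Module P6.
Set Implicit Arguments. Unset Strict Implicit. Unset Printing Implicit Defensive.
Import Order.TTheory GRing.Theory Num.Theory.
Local Open Scope ring_scope.

Record Hyps (q : nat) (S : nat -> nat -> nat -> int) (H : nat -> nat -> nat -> nat -> int) := {
  hq : (1 < q)%N;
  HS0 : forall t l m, H t l m 0 = S t l m;
  H0 : forall l m r, H 0 l m r = 1;
  S0 : forall l m, S 0 l m = 1;
  Sl0 : forall t m, S t 0 m = 1;
  Srec : forall t l m, (0 < t)%N ->
    S t l.+1 m.+1 = S t l m.+1 + ((q ^ m.+1)%:R - 1) * (q ^ l)%:R * S t.-1 l m;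
  Hrec : forall t l m r, (0 < t)%N -> (0 < r)%N -> (r.-1 <= l)%N -> (r.-1 <= m)%N ->
    H t l.+1 m.+1 r = H t l m.+1 r.-1 - (q ^ l)%:R * H t.-1 l m r.-1;
  Sinj : forall a n p, (0 < a)%N -> (q ^ n)%:R * S a.-1 n p <= S a n p.+1;
  Sinjlt : forall a n p, (0 < a)%N -> (a <= n)%N -> (a <= p)%N ->
    (q ^ n)%:R * S a.-1 n p < S a n p.+1
}.

Lemma G_eq q S H (h : Hyps q S H) t l m : (0 < t)%N ->
  H t l.+1 m.+1 1 = S t l m.+1 - (q ^ l)%:R * S t.-1 l m.
Proof. by move=> t0; rewrite (Hrec h) // !(HS0 h). Qed.

Lemma Diff q S H (h : Hyps q S H) t l0 m0 : (0 < t)%N -> (l0.+1 <= m0)%N ->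
  0 <= H t l0.+2 m0.+1 1 - H t l0.+1 m0.+1 1 - (q ^ l0.+1)%:R * H t.-1 l0.+1 m0 1 /\
  ((1 < t)%N -> (t <= l0.+1)%N -> (l0.+2 <= m0.+1)%N ->
   0 < H t l0.+2 m0.+1 1 - H t l0.+1 m0.+1 1 - (q ^ l0.+1)%:R * H t.-1 l0.+1 m0 1).
Proof.
move=> t0 lm; case: m0 lm => // m1 lm.
have q1 := hq h.
have Q2 : (2 <= q%:R :> int) by rewrite ler_nat.
have x0 : (0 < (q ^ l0)%:R :> int) by rewrite ltr0n expn_gt0; lia.
have y0 : (1 <= (q ^ m1)%:R :> int) by rewrite ler1n expn_gt0; lia.
case: t t0 => // [[_|t1 _]].
  rewrite (H0 h) !(G_eq h) // (Srec h) // !(S0 h) /=.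
  rewrite !expnS !natrM.
  set x := (q ^ l0)%:R in x0 *; set y := (q ^ m1)%:R in y0 *; set Q := q%:R in Q2 *; set A := S _ _ _.
  have -> : A + (Q * (Q * y) - 1) * x * 1 - Q * x * 1 - (A - x * 1) - Q * x * 1
            = Q * x * (Q * y - 2) by ring.
  split=> [|//]; rewrite !mulr_ge0 //; try lra; nra.
rewrite !(G_eq h) // !(Srec h) //=.
rewrite !expnS !natrM.
have si := Sinj h l0 m1 (isT : (0 < t1.+1)%N).
set x := (q ^ l0)%:R in si x0 *; set y := (q ^ m1)%:R in y0 *; set Q := q%:R in Q2 *.
set A := S _ l0 _; set s1 := S t1.+1 l0 m1.+1 in si *; set s2 := S t1 l0 m1 in si *.
have Qy : 2 <= Q * y by rewrite -[2]mulr1 ler_pM.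
have -> : A + (Q * (Q * y) - 1) * x * s1 - Q * x * (s1 + (Q * y - 1) * x * s2) -
    (A - x * s1) - Q * x * (s1 - x * s2) = Q * x * (Q * y - 2) * (s1 - x * s2) by ring.
split.
  rewrite !mulr_ge0 //; lra.
move=> _ tl lm2.
have a1 : (t1.+1 <= l0)%N by lia.
have a2 : (t1.+1 <= m1)%N by lia.
have sl := Sinjlt h (isT : (0 < t1.+1)%N) a1 a2.
rewrite /= -/x -/s1 -/s2 in sl.
have y2 : (2 <= y).
  rewrite /y ler_nat; apply: leq_trans q1 _.
  by rewrite -{1}(expn1 q) leq_exp2l //; lia.
have Qy4 : 2 * 2 <= Q * y by rewrite ler_pM.
rewrite !mulr_gt0 //; lra.
Qed.

Lemma claimA q S H (h : Hyps q S H) l : forall t m, (1 <= l <= m)%N ->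
  0 <= H t l m 1 /\ (forall r, (1 <= r <= l)%N -> `|H t l m r| <= H t l m 1).
Proof.
elim: l => [|l IH] t m /andP[l1 lm] //.
case: l IH l1 lm => [|l0] IH _ lm.
  suff G0 : 0 <= H t 1 m 1.
    split=> // r /andP[r1 r2]; have -> : r = 1%N by lia.
    by rewrite ger0_norm.
  case: t => [|t]; first by rewrite (H0 h).
  case: m lm => // m' _; rewrite (G_eq h) // !(Sl0 h) expn0 mul1r subrr.
  done.
case: m lm => // m0 lm.
case: t => [|t1].
  by rewrite (H0 h); split=> // r _; rewrite (H0 h) normr1.
set t := t1.+1; have t0 : (0 < t)%N by [].
have [D1 _] := Diff h t0 (lm : (l0.+1 <= m0)%N).
have [G2 B2] := IH t m0.+1 (ltac:(lia)).
have [G3 B3] := IH t.-1 m0 (ltac:(lia)).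
have qpos : 0 < (q ^ l0.+1)%:R :> int by rewrite ltr0n expn_gt0; have := hq h; lia.
have GG : H t l0.+1 m0.+1 1 + (q ^ l0.+1)%:R * H t.-1 l0.+1 m0 1 <= H t l0.+2 m0.+1 1.
  lra.
have G0 : 0 <= H t l0.+2 m0.+1 1.
  have : 0 <= (q ^ l0.+1)%:R * H t.-1 l0.+1 m0 1 by rewrite mulr_ge0 // ltW.
  lra.
split=> // r /andP[r1 r2].
have [->|r2'] := eqVneq r 1%N; first by rewrite ger0_norm.
rewrite (Hrec h) //; try lia.
apply: le_trans (ler_normB _ _) _; rewrite normrM (ger0_norm (ltW qpos)).
have ha : `|H t l0.+1 m0.+1 r.-1| <= H t l0.+1 m0.+1 1 by apply: B2; lia.
have hb : `|H t.-1 l0.+1 m0 r.-1| <= H t.-1 l0.+1 m0 1 by apply: B3; lia.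
have : (q ^ l0.+1)%:R * `|H t.-1 l0.+1 m0 r.-1| <= (q ^ l0.+1)%:R * H t.-1 l0.+1 m0 1.
  by rewrite ler_pM2l.
lra.
Qed.

Lemma claimB q S H (h : Hyps q S H) t l m r :
  (1 <= t)%N -> (t < l)%N -> (l <= m)%N -> (2 <= r <= l)%N -> H t l m r < H t l m 1.
Proof.
move=> t1 tl lm /andP[r2 rl].
case: l tl lm rl => [|[|l0]] tl lm rl; try (exfalso; lia).
case: m lm => // m0 lm.
have t0 : (0 < t)%N by [].
have [D1 D2] := Diff h t0 (lm : (l0.+1 <= m0)%N).
have [G2 B2] := claimA h t (ltac:(lia) : (1 <= l0.+1 <= m0.+1)%N).
have [G3 B3] := claimA h t.-1 (ltac:(lia) : (1 <= l0.+1 <= m0)%N).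
have qpos : 0 < (q ^ l0.+1)%:R :> int by rewrite ltr0n expn_gt0; have := hq h; lia.
rewrite (Hrec h) //; try lia.
have ha : `|H t l0.+1 m0.+1 r.-1| <= H t l0.+1 m0.+1 1 by apply: B2; lia.
have ha' := ler_norm (H t l0.+1 m0.+1 r.-1).
have [t_1|t_2] := eqVneq t 1%N.
  subst t; rewrite /= (H0 h) mulr1 in D1; rewrite /= (H0 h) mulr1; lra.
have D := D2 (ltac:(lia)) (ltac:(lia)) (ltac:(lia)).
have hb : `|H t.-1 l0.+1 m0 r.-1| <= H t.-1 l0.+1 m0 1 by apply: B3; lia.
have : (q ^ l0.+1)%:R * `|H t.-1 l0.+1 m0 r.-1| <= (q ^ l0.+1)%:R * H t.-1 l0.+1 m0 1.
  by rewrite ler_pM2l.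
have : - ((q ^ l0.+1)%:R * H t.-1 l0.+1 m0 r.-1) <= (q ^ l0.+1)%:R * `|H t.-1 l0.+1 m0 r.-1|.
  by rewrite -mulrN ler_pM2l // -normrN ler_norm.
lra.
Qed.

End P6.
Import P6.

Module P7.
Set Implicit Arguments. Unset Strict Implicit. Unset Printing Implicit Defensive.
Import Order.TTheory GRing.Theory Num.Theory.
Local Open Scope ring_scope.

Lemma q_gt1 (F : finFieldType) : (1 < #|F|)%N.
Proof. exact: card_finNzRing_gt1. Qed.

Lemma hyps (F : finFieldType) : Hyps #|F| (fun t l m => (sig F t l m)%:R) (Hr F).
Proof.
have q1 := q_gt1 F.
split => //.
- by move=> t l m; rewrite Hr0.
- by move=> l m r; rewrite Hr_t0.
- by move=> l m; rewrite sig_t0.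
- by move=> t m; rewrite sig_l0.
- move=> t l m t0; rewrite -[l.+1]add1n -[m.+1]add1n sig_rec // natrD !natrM natrB.
    by rewrite mulrA.
  by rewrite expn_gt0; lia.
- move=> t l m r t0 r0 rl rm; rewrite -[l.+1]add1n -[m.+1]add1n Hr_rec //.
- by move=> a n p a0; rewrite -natrM ler_nat -add1n sig_inj.
- by move=> a n p a0 an ap; rewrite -natrM ltr_nat -add1n sig_inj_lt.
Qed.

Lemma tau_pid (F : finFieldType) l m r (M : 'M[F]_(l,m)) :
  tau r M = evalf (pid_mx r) M.
Proof.
rewrite /tau /evalf big_mkcond /=; apply: eq_bigr => i _.
rewrite big_mkcond /=; case: ifP => ir.
  apply: eq_bigr => j _; rewrite mxE; case: eqP => [ji|nji]; rewrite ?ji ?eqxx ?ir /=.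
    by rewrite mul1r.
  by rewrite eq_sym; case: eqP => // ?; rewrite mul0r.
by rewrite big1 // => j _; rewrite mxE ir andbF mul0r.
Qed.

Lemma card_nz (F : finFieldType) t l m (A : 'M[F]_(l,m)) :
  #|[set M : 'M[F]_(l,m) | (1 <= \rank M <= t)%N && (evalf A M != 0)]| = (#|F|.-1 * cnt t A 1%R)%N.
Proof.
have E := cnt_sig t A.
have S : sig F t l m = (cnt t A 0%R + #|[set M : 'M[F]_(l,m) | (1 <= \rank M <= t)%N && (evalf A M != 0%R)]|)%N.
  rewrite /sig cntE !card_setE -big_split /=; apply: eq_bigr => M _.
  case: eqP => [E0|nz]; rewrite ?andbT ?andbF ?addn0 //=.
  rewrite lt0n mxrank_eq0; case: eqP => [M0|] //=.
    by case: nz; rewrite M0 evalf0.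
by rewrite S in E; move/addnI: E.
Qed.

Lemma what_cnt (F : finFieldType) t l m r :
  what F t l m r = cnt t (pid_mx r : 'M[F]_(l,m)) 1.
Proof.
rewrite /what.
have -> : [set M : 'M[F]_(l,m) | (1 <= \rank M <= t)%N && (tau r M != 0)]
  = [set M : 'M[F]_(l,m) | (1 <= \rank M <= t)%N && (evalf (pid_mx r) M != 0)].
  by apply/setP => M; rewrite !inE tau_pid.
rewrite card_nz mulKn //; have := q_gt1 F; lia.
Qed.

Lemma sig_H (F : finFieldType) t l m (A : 'M[F]_(l,m)) :
  ((sig F t l m)%:R : int) = hh t A + (#|F|)%:R * (cnt t A 1)%:R.
Proof.
rewrite (cnt_sig t A) /hh natrD natrM -[#|F| in RHS](prednK (ltnW (q_gt1 F))).
rewrite -addn1 natrD; ring.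
Qed.

Theorem ineq (F : finFieldType) t l m r :
  (1 <= t)%N -> (t < l)%N -> (l <= m)%N -> (2 <= r <= l)%N ->
  (what F t l m 1 < what F t l m r)%N.
Proof.
move=> t1 tl lm rl.
have := claimB (hyps F) t1 tl lm rl.
rewrite !what_cnt /Hr.
have E1 := sig_H t (pid_mx 1 : 'M[F]_(l,m)).
have E2 := sig_H t (pid_mx r : 'M[F]_(l,m)).
move=> h; rewrite -(ltr_nat int) -(@ltr_pM2l _ (#|F|)%:R); last first.
  by rewrite ltr0n; have := q_gt1 F; lia.
lra.
Qed.

End P7.
Import P7.

Module P8.
Set Implicit Arguments. Unset Strict Implicit. Unset Printing Implicit Defensive.
Import GRing.Theory Num.Theory.
Local Open Scope ring_scope.

Lemma mxvecZ (F : fieldType) l m (a : F) (M : 'M[F]_(l,m)) k :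
  mxvec (a *: M) 0 k = a * mxvec M 0 k.
Proof. by rewrite linearZ mxE. Qed.

Lemma norm_first (F : finFieldType) l m (N : 'M[F]_(l,m)) :
  normalized N -> exists i : 'I_(l * m),
    mxvec N 0 i = 1 /\ forall j, mxvec N 0 j != 0 -> (i <= j)%N.
Proof.
case/existsP => i /andP[/eqP Ni /forallP H]; exists i; split=> // j nz.
rewrite leqNgt; apply/negP => ji; have := H j; rewrite ji /= => /eqP Nj.
by rewrite Nj eqxx in nz.
Qed.

Lemma proj_count (F : finFieldType) t l m (f : 'M[F]_(l,m)) :
  #|[set M : 'M[F]_(l,m) | (1 <= \rank M <= t)%N && (evalf f M != 0)]|
  = (#|F|.-1 * #|[set N in Dpts F t l m | evalf f N != 0%R]|)%N.
Proof.
set D2 := setX [set k : F | k != 0] [set N in Dpts F t l m | evalf f N != 0].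
have inj : {in D2 &, injective (fun p : F * 'M[F]_(l,m) => p.1 *: p.2)}.
  move=> [a1 N1] [a2 N2]; rewrite /D2 /Dpts !inE /=.
  move=> /and3P[a1z /andP[n1 _] _] /and3P[a2z /andP[n2 _] _] E.
  have [i1 [v1 f1]] := norm_first n1; have [i2 [v2 f2]] := norm_first n2.
  have E' : forall k, a1 * mxvec N1 0 k = a2 * mxvec N2 0 k.
    by move=> k; rewrite -!mxvecZ E.
  have le12 : (i1 <= i2)%N.
    apply: f1; have := E' i2; rewrite v2 mulr1 => e.
    by apply/eqP => h; move: e; rewrite h mulr0 => /eqP; rewrite eq_sym (negbTE a2z).
  have le21 : (i2 <= i1)%N.
    apply: f2; have := E' i1; rewrite v1 mulr1 => e.
    by apply/eqP => h; move: e; rewrite h mulr0 => /eqP; rewrite (negbTE a1z).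
  have ei : i1 = i2 by apply: val_inj; apply/eqP; rewrite eqn_leq le12 le21.
  have ea : a1 = a2 by have := E' i1; rewrite v1 ei v2 !mulr1.
  by congr (_, _) => //; apply: (scalerI a1z); rewrite E ea.
have img : [set p.1 *: p.2 | p in D2] =
    [set M : 'M[F]_(l,m) | (1 <= \rank M <= t)%N && (evalf f M != 0)].
  apply/setP => M; rewrite inE; apply/imsetP/idP.
    move=> [[a N]]; rewrite /D2 /Dpts !inE /= => /and3P[az /andP[nN rN] fN] ->.
    rewrite evalfZ mulf_neq0 // andbT mxrank_scale_nz // rN andbT lt0n mxrank_eq0.
    by apply/eqP => N0; move: fN; rewrite N0 evalf0 eqxx.
  move=> /andP[/andP[r1 rt] fM].
  have Mnz : mxvec M != 0.
    apply/eqP => h; move: r1; rewrite lt0n mxrank_eq0 -(mxvecK M) h.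
    by rewrite linear0 eqxx.
  have [z [k0 nk0]] := nz_entry Mnz; rewrite ord1 in nk0.
  case: (@arg_minnP _ k0 (fun k => mxvec M 0 k != 0) (fun k : 'I_(l * m) => nat_of_ord k) nk0) => i Mi mini.
  set a := mxvec M 0 i.
  have az : a^-1 != 0 by rewrite invr_eq0.
  exists (a, a^-1 *: M); last by rewrite /= scalerA divff // scale1r.
  rewrite /D2 /Dpts !inE /= Mi /= mxrank_scale_nz // rt evalfZ mulf_neq0 // !andbT.
  apply/existsP; exists i; rewrite mxvecZ mulVf // eqxx /=.
  apply/forallP => j; apply/implyP => ji; rewrite mxvecZ.
  case: (eqVneq (mxvec M 0 j) 0) => [->|nz]; first by rewrite mulr0.
  by have := mini j nz; rewrite leqNgt ji.
rewrite -img card_in_imset // cardsX; congr (_ * _)%N.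
rewrite -(cardC1 (0 : F)); apply: eq_card => k; by rewrite !inE.
Qed.

Lemma wt_codeword (F : finFieldType) t l m (f : 'M[F]_(l,m)) :
  wt (codeword t f) = cnt t f 1.
Proof.
have q1 := q_gt1 F.
have E : #|[set k : 'I_#|Dpts F t l m| | codeword t f 0 k != 0]|
       = #|[set N in Dpts F t l m | evalf f N != 0]|.
  have -> : [set N in Dpts F t l m | evalf f N != 0]
      = enum_val @: [set k : 'I_#|Dpts F t l m| | codeword t f 0 k != 0].
    apply/setP => N; rewrite inE; apply/andP/imsetP.
      move=> [ND fN]; exists (enum_rank_in ND N); last by rewrite enum_rankK_in.
      by rewrite inE mxE enum_rankK_in.
    move=> [k]; rewrite inE mxE => fk ->; split=> //; exact: enum_valP.
  by rewrite card_imset //; exact: enum_val_inj.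
apply/eqP; rewrite /wt E -(eqn_pmul2l (_ : 0 < #|F|.-1)%N); last by lia.
by rewrite -proj_count card_nz.
Qed.

End P8.
Import P8.

Module P9.
Set Implicit Arguments. Unset Strict Implicit. Unset Printing Implicit Defensive.
Import GRing.Theory Num.Theory.
Local Open Scope ring_scope.

Lemma codewordD (F : finFieldType) t l m (f g : 'M[F]_(l,m)) :
  codeword t (f + g) = codeword t f + codeword t g.
Proof.
apply/matrixP => i j; rewrite !mxE.
by rewrite -[f]scale1r evalf_linearl mul1r scale1r.
Qed.

Lemma codewordZ (F : finFieldType) t l m (a : F) (f : 'M[F]_(l,m)) :
  codeword t (a *: f) = a *: codeword t f.
Proof.
apply/matrixP => i j; rewrite !mxE.
by rewrite -[a *: f]addr0 evalf_linearl evalf0l addr0.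
Qed.

Lemma codeword0 (F : finFieldType) t l m : codeword t (0 : 'M[F]_(l,m)) = 0.
Proof. by apply/matrixP => i j; rewrite !mxE evalf0l. Qed.

Lemma codeword_sum (F : finFieldType) t l m (I : Type) (r : seq I) (P : pred I)
  (G : I -> 'M[F]_(l,m)) :
  codeword t (\sum_(i <- r | P i) G i) = \sum_(i <- r | P i) codeword t (G i).
Proof. exact: (big_morph _ (@codewordD F t l m) (codeword0 F t l m)). Qed.

Lemma wt0 (F : finFieldType) n : wt (0 : 'rV[F]_n) = 0%N.
Proof. by rewrite /wt; apply/eqP; rewrite cards_eq0; apply/eqP/setP => k; rewrite !inE mxE eqxx. Qed.

Lemma pid1_delta (F : fieldType) l m : (pid_mx 1 : 'M[F]_(l.+1, m.+1)) = delta_mx 0 0.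
Proof.
apply/matrixP => i j; rewrite !mxE.
case: i j => [[|i] Hi] [[|j] Hj]; by rewrite /= ?andbF.
Qed.

Lemma what1_pos (F : finFieldType) t l m : (1 <= t)%N -> (0 < l)%N -> (0 < m)%N ->
  (0 < what F t l m 1)%N.
Proof.
move=> t1; case: l => // l; case: m => // m _ _.
rewrite what_cnt pid1_delta cntE (bigD1 (delta_mx 0 0)) //= evalf_delta mxE !eqxx /=.
by rewrite -pid1_delta rank_pid_mx // t1.
Qed.

Lemma wt_rank (F : finFieldType) t l m (f : 'M[F]_(l,m)) :
  wt (codeword t f) = what F t l m (\rank f).
Proof. by rewrite wt_codeword cnt_rank what_cnt. Qed.

Lemma wt_ge (F : finFieldType) t l m (f : 'M[F]_(l,m)) :
  (1 <= t)%N -> (t < l)%N -> (l <= m)%N -> f != 0 ->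
  (what F t l m 1 <= wt (codeword t f))%N /\
  ((wt (codeword t f) == what F t l m 1) = (\rank f == 1%N)).
Proof.
move=> t1 tl lm nz; rewrite wt_rank.
have r1 : (1 <= \rank f)%N by rewrite lt0n mxrank_eq0.
have rl := rank_leq_row f.
have [->|r2] := eqVneq (\rank f) 1%N; first by rewrite eqxx.
have lt := @ineq F t l m _ t1 tl lm (ltac:(lia) : (2 <= \rank f <= l)%N).
split; first exact: ltnW.
by apply/negbTE; rewrite neq_ltn lt orbT.
Qed.

Lemma cw_inj (F : finFieldType) t l m :
  (1 <= t)%N -> (t < l)%N -> (l <= m)%N -> injective (@codeword F t l m).
Proof.
move=> t1 tl lm f g E; apply/eqP; rewrite -subr_eq0; apply/negPn/negP => nz.
have [le _] := wt_ge t1 tl lm nz.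
have : codeword t (f - g) = 0.
  by rewrite codewordD -scaleN1r codewordZ scaleN1r E subrr.
move=> h; move: le; rewrite h wt0 leqn0 => /eqP w0.
have := what1_pos F t1 (ltac:(lia) : (0 < l)%N) (ltac:(lia) : (0 < m)%N); lia.
Qed.


End P9.
Import P9.

Theorem mainTheorem7 (F : finFieldType) (t l m : nat) :
  (1 <= t)%N -> (t < l)%N -> (l <= m)%N ->
  (forall r : nat, (2 <= r <= l)%N -> (what F t l m 1 < what F t l m r)%N) /\
  exists d : nat,
    is_min_weight (Cdet F t l m) d /\
    #|min_words (Cdet F t l m) d| = mu F 1 l m /\
    [set c | c \in <<enum (min_words (Cdet F t l m) d)>>%VS] = Cdet F t l m /\
    (forall c, c \in Cdet F t l m ->
       exists2 s : seq 'rV[F]_#|Dpts F t l m|,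
         (size s <= l)%N /\ all (fun x => x \in min_words (Cdet F t l m) d) s &
         c = \sum_(x <- s) x).
Proof.
move=> t1 tl lm.
split; first by move=> r rl; exact: (@ineq F t l m r t1 tl lm rl).
set d := what F t l m 1.
set C := Cdet F t l m.
have l0 : (0 < l)%N by lia.
have m0 : (0 < m)%N by lia.
have dpos := what1_pos F t1 l0 m0.
have inC : forall f, codeword t f \in C by move=> f; apply/imsetP; exists f.
have CP : forall c, c \in C -> exists f, c = codeword t f.
  by move=> c /imsetP[f _ ->]; exists f.
have cw0 : forall f : 'M[F]_(l,m), (codeword t f == 0) = (f == 0).
  move=> f; apply/eqP/eqP => [|->]; last exact: codeword0.
  by rewrite -(codeword0 F t l m); exact: cw_inj.
have minP : forall c, (c \in min_words C d) =
    [exists f : 'M[F]_(l,m), (c == codeword t f) && (\rank f == 1%N)].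
  move=> c; rewrite inE; apply/andP/existsP.
    move=> [cC /andP[nz w]]; have [f cf] := CP c cC; exists f.
    rewrite cf eqxx /=; have fnz : f != 0 by rewrite -cw0 -cf.
    by have [_ <-] := wt_ge t1 tl lm fnz; rewrite -cf.
  move=> [f /andP[/eqP -> r1]].
  have fnz : f != 0 by rewrite -mxrank_eq0 (eqP r1).
  split; first exact: inC.
  by rewrite cw0 fnz /=; have [_ ->] := wt_ge t1 tl lm fnz.
have rank1cw : forall f : 'M[F]_(l,m), \rank f == 1%N -> codeword t f \in min_words C d.
  by move=> f r1; rewrite minP; apply/existsP; exists f; rewrite eqxx.
have decomp : forall c, c \in C -> exists2 s : seq 'rV[F]_#|Dpts F t l m|,
    (size s <= l)%N /\ all (fun x => x \in min_words C d) s & c = \sum_(x <- s) x.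
  move=> c /CP[f ->].
  set p := fun i : 'I_l => (delta_mx i 0 : 'M[F]_(l,1)) *m row i f.
  have fE : f = \sum_i p i.
    rewrite /p; under eq_bigr => i _ do rewrite rowE mulmxA mul_delta_mx.
    by rewrite -mulmx_suml -mx1_sum_delta mul1mx.
  exists [seq codeword t (p i) | i <- enum [pred i | p i != 0]].
    split.
      rewrite size_map -cardE; apply: leq_trans (max_card _) _; rewrite card_ord //.
    apply/allP => x /mapP[i]; rewrite mem_enum inE => nz ->; apply: rank1cw.
    rewrite eqn_leq lt0n mxrank_eq0 nz andbT.
    by apply: leq_trans (mxrankM_maxl _ _) _; exact: rank_leq_col.
  rewrite big_map big_enum /= {1}fE codeword_sum (bigID (fun i => p i != 0)) /=.
  rewrite [X in _ + X]big1 ?addr0 // => i /negPn/eqP ->; exact: codeword0.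
exists d; split; [|split; [|split]].
- split.
    exists (codeword t (pid_mx 1)); first exact: inC.
    by rewrite cw0 -mxrank_eq0 wt_rank rank_pid_mx // eqxx andbT.
  move=> c cC nz; have [f cf] := CP c cC; have fnz : f != 0 by rewrite -cw0 -cf.
  by have [] := wt_ge t1 tl lm fnz; rewrite -cf.
- have -> : min_words C d = (@codeword F t l m) @: [set f : 'M[F]_(l,m) | \rank f == 1%N].
    apply/setP => c; rewrite minP; apply/existsP/imsetP.
      by move=> [f /andP[/eqP -> r]]; exists f; rewrite ?inE.
    by move=> [f]; rewrite inE => r ->; exists f; rewrite eqxx r.
  by rewrite card_imset //; exact: cw_inj.
- apply/setP => c; rewrite inE; apply/idP/idP => [cin|/decomp [s [_ sall] ->]].
    set X := enum (min_words C d).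
    have := @coord_span _ _ _ (in_tuple X) c cin.
    set a := coord _; move=> ->.
    set g := fun i : 'I_(size X) => odflt 0 [pick f : 'M[F]_(l,m) | X`_i == codeword t f].
    have gE : forall i : 'I_(size X), X`_i = codeword t (g i).
      move=> i; have : X`_i \in min_words C d by rewrite -mem_enum mem_nth.
      rewrite minP => /existsP[f0 /andP[/eqP e0 _]].
      rewrite /g; case: pickP => [f /eqP //|/(_ f0)]; by rewrite e0 eqxx.
    have -> : \sum_i a i c *: (in_tuple X)`_i = codeword t (\sum_i a i c *: g i).
      by rewrite codeword_sum; apply: eq_bigr => i _; rewrite codewordZ -gE.
    exact: inC.
  rewrite big_seq; apply: memv_suml => x xs; apply: memv_span.
  by rewrite mem_enum; exact: (allP sall x xs).
- exact: decomp.
Qed.
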